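(* Let $a,b,p$ be integers with $a,b,p>1$ and $\gcd(a,b)=1$. Then the numerical semigroup $S=\langle a^p,\ a^p+b,\ a^p+ab,\ \dots,\ a^p+a^{p-1}b\rangle$ has $\alpha$-rectangular Apéry set and is not telescopic.
   Context: A numerical semigroup is a submonoid $S$ of $(\mathbb N,+)$ with finite complement in $\mathbb N$; $g_1<\dots<g_\nu$ is its minimal system of generators, $m=g_1$, and $\mathrm{Ap}(S)=\{s\in S: s-m\notin S\}$. For $i=2,\dots,\nu$: $\alpha_i=\max\{h\in\mathbb N: hg_i\in\mathrm{Ap}(S)\}$ and $\tau_i=\min\{h\in\mathbb N: hg_i\in\langle g_1,\dots,g_{i-1}\rangle\}-1$. $\mathrm{Ap}(S)$ is $\alpha$-rectangular if $\mathrm{Ap}(S)=\{\sum_{i=2}^\nu\lambda_ig_i: 0\le\lambda_i\le\alpha_i\}$; $S$ is telescopic if $\mathrm{Ap}(S)=\{\sum_{i=2}^\nu\lambda_ig_i: 0\le\lambda_i\le\tau_i\}$. *)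

(* Defs.v *)
From mathcomp Require Import all_boot.
Set Implicit Arguments. Unset Strict Implicit. Unset Printing Implicit Defensive.

Inductive mon (G : nat -> Prop) : nat -> Prop :=
| mon0 : mon G 0
| monS x y : G x -> mon G y -> mon G (x + y).

Definition monl (g : seq nat) : nat -> Prop := mon (fun x => x \in g).

(* A semigroup is represented by its membership predicate S : nat -> Prop.
   [g] is the minimal system of generators of S, listed increasingly:
   g generates S and no proper sub-list obtained by removing one element
   generates S. *)
Definition is_msg (S : nat -> Prop) (g : seq nat) : Prop :=
  sorted ltn g /\
  (forall x, S x <-> monl g x) /\
  (forall z, z \in g -> ~ (forall x, S x <-> monl (rem z g) x)).

(* Apéry set w.r.t. m : elements s of S such that the integer s - m is not in S. *)
Definition inAp (S : nat -> Prop) (m s : nat) : Prop :=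
  S s /\ ~ (m <= s /\ S (s - m)).

(* generator g_i (1-based indexing in the paper: g_(k+1) = nth 0 g k) *)
Definition gen (g : seq nat) (k : nat) : nat := nth 0 g k.

Definition is_alpha (S : nat -> Prop) (g : seq nat) (k h : nat) : Prop :=
  inAp S (gen g 0) (h * gen g k) /\
  (forall h', inAp S (gen g 0) (h' * gen g k) -> h' <= h).

Definition is_tau (g : seq nat) (k t : nat) : Prop :=
  monl (take k g) (t.+1 * gen g k) /\
  (forall h, 0 < h -> monl (take k g) (h * gen g k) -> t.+1 <= h).

Definition in_box (g : seq nat) (bound : nat -> nat) (s : nat) : Prop :=
  exists lam : nat -> nat,
    (forall k, 0 < k < size g -> lam k <= bound k) /\
    s = \sum_(1 <= k < size g) lam k * gen g k.

Definition alpha_rectangular (S : nat -> Prop) (g : seq nat) : Prop :=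
  exists alpha : nat -> nat,
    (forall k, 0 < k < size g -> is_alpha S g k (alpha k)) /\
    (forall s, inAp S (gen g 0) s <-> in_box g alpha s).

Definition telescopic (S : nat -> Prop) (g : seq nat) : Prop :=
  exists tau : nat -> nat,
    (forall k, 0 < k < size g -> is_tau g k (tau k)) /\
    (forall s, inAp S (gen g 0) s <-> in_box g tau s).

Definition gens_abp (a b p : nat) : seq nat :=
  a ^ p :: [seq a ^ p + a ^ i * b | i <- iota 0 p].

(* Main.v *)
Require Import Defs.
From mathcomp Require Import all_boot zify.
From Stdlib Require Import Classical.
Set Implicit Arguments. Unset Strict Implicit. Unset Printing Implicit Defensive.

Lemma monD G x y : mon G x -> mon G y -> mon G (x + y).
Proof. elim=> [//|u v Gu _ IH] Hy; rewrite -addnA; apply: monS => //; exact: IH. Qed.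

Lemma monM G k x : G x -> mon G (k * x).
Proof. move=> Gx; elim: k => [|k IH]; first exact: mon0. rewrite mulSn; exact: monS. Qed.

Lemma monG (G : nat -> Prop) x : G x -> mon G x.
Proof. move=> Gx; rewrite -(addn0 x); apply: monS => //; exact: mon0. Qed.

Lemma mon_mono (G H : nat -> Prop) x : (forall y, G y -> H y) -> mon G x -> mon H x.
Proof. move=> GH; elim=> [|u v Gu _ IH]; [exact: mon0 | apply: monS => //; exact: GH]. Qed.

Lemma mon_irr (G S : nat -> Prop) x :
  (forall y, G y -> S y) -> (forall y, mon G y -> S y) ->
  (forall u v, S u -> S v -> x = u + v -> u = 0 \/ v = 0) ->
  mon G x -> x <> 0 -> G x.
Proof.
move=> GS MS irr H; elim: H irr => [|u v Gu Hv IH] irr; first by [].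
move=> nz; case: (irr u v (GS u Gu) (MS v Hv) erefl) => [u0|v0].
  subst u; apply: IH => //= u' v' Su Sv e; exact: irr.
by subst v; rewrite addn0.
Qed.

Definition gi a b p i := a ^ p + a ^ i * b.

Lemma G0E a b p : gens_abp a b p = a ^ p :: map (gi a b p) (iota 0 p).
Proof. by []. Qed.

Lemma gen0 a b p : gen (gens_abp a b p) 0 = a ^ p. Proof. by []. Qed.
Lemma genS a b p i : i < p -> gen (gens_abp a b p) i.+1 = gi a b p i.
Proof. move=> ip; rewrite /gen G0E /= (nth_map 0) ?size_iota // nth_iota //. Qed.
Lemma size_G0 a b p : size (gens_abp a b p) = p.+1.
Proof. by rewrite G0E /= size_map size_iota. Qed.

Lemma mem_gi a b p i : i < p -> gi a b p i \in gens_abp a b p.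
Proof. move=> ip; rewrite G0E inE; apply/orP; right; apply: map_f; by rewrite mem_iota. Qed.
Lemma mem_m a b p : a ^ p \in gens_abp a b p.
Proof. by rewrite G0E inE eqxx. Qed.
Lemma sum_ind p i (F : nat -> nat) : i < p -> \sum_(j < p) (j == i :> nat) * F j = F i.
Proof.
move=> ip; rewrite (bigD1 (Ordinal ip)) //= eqxx mul1n big1 ?addn0 // => j.
by rewrite -val_eqE /= => /negbTE ->.
Qed.

Lemma S_comb a b p c (l : nat -> nat) :
  monl (gens_abp a b p) (c * a ^ p + \sum_(j < p) l j * gi a b p j).
Proof.
apply: monD; first by apply: monM; exact: mem_m.
apply: (big_ind (fun x => monl (gens_abp a b p) x)); first exact: mon0.
  by move=> x y; apply: monD.
move=> j _; apply: monM; exact: mem_gi.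
Qed.

Lemma S_rep a b p x : monl (gens_abp a b p) x ->
  exists c (l : nat -> nat), x = c * a ^ p + \sum_(j < p) l j * gi a b p j.
Proof.
elim=> [|u v Gu _ [c [l ->]]]; first by exists 0, (fun _ => 0); rewrite big1.
move: Gu; rewrite G0E inE => /orP [/eqP ->|/mapP [i]].
  by exists c.+1, l; rewrite mulSn addnA.
rewrite mem_iota add0n => /andP [_ ip] ->.
exists c, (fun j => l j + (j == i :> nat)).
have -> : \sum_(j < p) (l j + (j == i :> nat)) * gi a b p j =
  \sum_(j < p) l j * gi a b p j + \sum_(j < p) (j == i :> nat) * gi a b p j.
  by rewrite -big_split; apply: eq_bigr => j _; rewrite mulnDl.
rewrite  /= sum_ind //; lia.
Qed.

Lemma sum_split a b p (l : nat -> nat) :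
  \sum_(j < p) l j * gi a b p j = (\sum_(j < p) l j) * a ^ p + b * \sum_(j < p) l j * a ^ j.
Proof.
rewrite big_distrl big_distrr /= -big_split /=; apply: eq_bigr => j _.
rewrite /gi; lia.
Qed.
Lemma rep2 a b p x : monl (gens_abp a b p) x -> x <> 0 ->
  exists C M, 0 < C /\ x = C * a ^ p + b * M.
Proof.
move=> /S_rep [c [l ->]]; rewrite sum_split => nz.
exists (c + \sum_(j < p) l j), (\sum_(j < p) l j * a ^ j); split; last by lia.
case: (posnP (c + \sum_(j < p) l j)) => // /eqP; rewrite addn_eq0 => /andP [/eqP c0 /eqP s0].
exfalso; apply: nz.
have -> : \sum_(j < p) l j * a ^ j = 0.
  apply: big1 => j _.
  have : l j <= \sum_(k < p) l k by rewrite (bigD1 j) //= leq_addr.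
  by rewrite s0 leqn0 => /eqP ->.
by rewrite c0 s0 muln0.
Qed.

Lemma ltn_pow a i p : 1 < a -> i < p -> a ^ i < a ^ p.
Proof. by move=> a1 ip; rewrite ltn_exp2l. Qed.

Lemma irr a b p x u v : 1 < a -> coprime a b ->
  x \in gens_abp a b p -> monl (gens_abp a b p) u -> monl (gens_abp a b p) v ->
  x = u + v -> u = 0 \/ v = 0.
Proof.
move=> a1 cab xG Su Sv e.
case: (posnP u) => [->|un]; first by left.
case: (posnP v) => [->|vn]; first by right.
exfalso.
have [Cu [Mu [Cu1 Eu]]] := rep2 Su (ltac:(lia)).
have [Cv [Mv [Cv1 Ev]]] := rep2 Sv (ltac:(lia)).
have P0 : 0 < a ^ p by rewrite expn_gt0; lia.
move: xG; rewrite G0E inE => /orP [/eqP xm|/mapP [i]].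
  move: e; rewrite xm Eu Ev; nia.
rewrite mem_iota add0n => /andP [_ ip] xi; rewrite xi in e.
have Q := ltn_pow a1 ip.
move: e; rewrite Eu Ev /gi => e.
set P := a ^ p in P0 Q e; set R := a ^ i in Q e.
have eq2 : b * (R - (Mu + Mv)) = (Cu + Cv - 1) * P by nia.
have hM : Mu + Mv < R.
  case: (ltnP (Mu + Mv) R) => // h; move: eq2; rewrite (_ : R - (Mu + Mv) = 0) ?muln0; nia.
have : P %| R - (Mu + Mv).
  rewrite -(@Gauss_dvdr P b); last exact: coprimeXl.
  by rewrite eq2 dvdn_mull.
move/dvdn_leq; lia.
Qed.
Lemma gi_mono a b p : 1 < a -> 0 < b -> {homo gi a b p : x y / x < y >-> x < y}.
Proof. move=> a1 b0 x y xy; rewrite /gi ltn_add2l ltn_pmul2r // ltn_exp2l //. Qed.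

Lemma sorted_G0 a b p : 1 < a -> 0 < b -> 0 < p -> sorted ltn (gens_abp a b p).
Proof.
move=> a1 b0 p0; rewrite G0E.
have := homo_sorted (@gi_mono a b p a1 b0) _ (iota_ltn_sorted 0 p).
case: p p0 => // p _ /= ->; rewrite andbT /gi expn0 mul1n; lia.
Qed.

Lemma G0_pos a b p x : 1 < a -> x \in gens_abp a b p -> 0 < x.
Proof.
move=> a1; rewrite G0E inE => /orP [/eqP ->|/mapP [i _ ->]]; rewrite /gi;
  have : 0 < a ^ p by rewrite expn_gt0; lia.
all: lia.
Qed.

Lemma uniq_G0 a b p : 1 < a -> 0 < b -> 0 < p -> uniq (gens_abp a b p).
Proof. move=> *; apply: (sorted_uniq ltn_trans ltnn); exact: sorted_G0. Qed.

Lemma msg_G0 a b p : 1 < a -> 0 < b -> 0 < p -> coprime a b ->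
  is_msg (monl (gens_abp a b p)) (gens_abp a b p).
Proof.
move=> a1 b0 p0 cab; split; first exact: sorted_G0.
split; first by [].
move=> z zG H.
have Hz : monl (rem z (gens_abp a b p)) z by apply/H; apply: monG.
suff : z \in rem z (gens_abp a b p) by rewrite mem_rem_uniqF ?uniq_G0.
apply: (mon_irr (S := monl (gens_abp a b p))) Hz _.
- by move=> y /mem_rem yG; apply: monG.
- by move=> y /H.
- by move=> u v; apply: irr.
- by have := G0_pos a1 zG; lia.
Qed.

Lemma msg_uniq a b p g : 1 < a -> 0 < b -> 0 < p -> coprime a b ->
  is_msg (monl (gens_abp a b p)) g -> g = gens_abp a b p.
Proof.
move=> a1 b0 p0 cab [sg [Hg Hmin]].
have ug : uniq g := sorted_uniq ltn_trans ltnn sg.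
have sub1 : forall x, x \in gens_abp a b p -> x \in g.
  move=> x xG; have Hx : monl g x by apply/Hg; apply: monG.
  apply: (mon_irr (S := monl (gens_abp a b p))) Hx _.
  - by move=> y yg; apply/Hg; apply: monG.
  - by move=> y /Hg.
  - by move=> u v; apply: irr.
  - by have := G0_pos a1 xG; lia.
apply: (irr_sorted_eq ltn_trans ltnn) => //; first exact: sorted_G0.
move=> z; apply/idP/idP; last exact: sub1.
move=> zg; apply/negPn/negP => zG; apply: (Hmin z zg) => x; split.
- move=> Sx; apply: mon_mono Sx => y yG /=.
  rewrite mem_rem_uniq // inE sub1 // andbT; apply/eqP => yz; subst y.
  by rewrite yG in zG.
- by move=> Rx; apply/Hg; apply: mon_mono Rx => y /mem_rem.
Qed.
Lemma sum_recl n (F : nat -> nat) : \sum_(j < n.+1) F j = F 0 + \sum_(j < n) F j.+1.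
Proof. by rewrite big_ord_recl; congr (_ + _); apply: eq_bigr => i _; rewrite /bump add1n. Qed.

Lemma sum_shift a n (f : nat -> nat) :
  \sum_(i < n) f i.+1 * a ^ i.+1 = a * \sum_(i < n) f i.+1 * a ^ i.
Proof. rewrite big_distrr /=; apply: eq_bigr => i _; rewrite expnS; lia. Qed.

Lemma digit_exist a n N : 0 < a -> N < a ^ n ->
  exists mu : nat -> nat, (forall j, j < n -> mu j < a) /\ N = \sum_(j < n) mu j * a ^ j.
Proof.
move=> a0; elim: n N => [|n IH] N hN.
  by exists (fun _ => 0); split => //; rewrite big_ord0; rewrite expn0 in hN; lia.
have hq : N %/ a < a ^ n by rewrite ltn_divLR // mulnC -expnS.
have [mu [mub Emu]] := IH _ hq.
exists (fun j => if j is j'.+1 then mu j' else N %% a); split.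
  by case=> [|j] /=; [rewrite ltn_mod | move=> jn; apply: mub].
rewrite (sum_recl n (fun j => (if j is j'.+1 then mu j' else N %% a) * a ^ j)) /= expn0 muln1.
rewrite (sum_shift a n (fun j => if j is j'.+1 then mu j' else N %% a)) /=.
by rewrite -Emu {1}(divn_eq N a); lia.
Qed.

Lemma digit_bound a n (mu : nat -> nat) : (forall j, j < n -> mu j < a) ->
  \sum_(j < n) mu j * a ^ j < a ^ n.
Proof.
elim: n mu => [|n IH] mu hmu; first by rewrite big_ord0 expn0.
rewrite big_ord_recr /=.
have := IH mu (fun j jn => hmu j (ltnW jn)); have := hmu n (ltnSn n).
rewrite expnS; set X := \sum_(i < n) _; move=> h1 h2.
have : mu n * a ^ n + a ^ n <= a * a ^ n by rewrite addnC -mulSn leq_mul2r h1 orbT.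
lia.
Qed.

Lemma digit_uniq a n (mu nu : nat -> nat) : 0 < a ->
  (forall j, j < n -> mu j < a) -> (forall j, j < n -> nu j < a) ->
  \sum_(j < n) mu j * a ^ j = \sum_(j < n) nu j * a ^ j ->
  forall j, j < n -> mu j = nu j.
Proof.
move=> a0; elim: n mu nu => [//|n IH] mu nu hmu hnu.
rewrite (sum_recl n (fun j => mu j * a ^ j)) (sum_recl n (fun j => nu j * a ^ j)) /= !expn0 !muln1.
rewrite (sum_shift a n mu) (sum_shift a n nu) => e.
have e0 : mu 0 = nu 0.
  have := congr1 (modn^~ a) e; rewrite ![_ + a * _]addnC ![a * _]mulnC !modnMDl !modn_small //.
  - by apply: hnu.
  - by apply: hmu.
move: e; rewrite e0 => /addnI /eqP; rewrite eqn_pmul2l // => /eqP e.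
case=> [//|j] jn.
exact: (IH (fun i => mu i.+1) (fun i => nu i.+1) (fun i h => hmu i.+1 h) (fun i h => hnu i.+1 h) e j jn).
Qed.
Lemma dec (S : nat -> Prop) m x : 0 < m -> S x -> exists k w, inAp S m w /\ x = k * m + w.
Proof.
move=> m0; elim/ltn_ind: x => x IH Sx.
case: (classic (m <= x /\ S (x - m))) => [[mx Sxm]|nA].
- have [k [w [Aw e]]] := IH (x - m) ltac:(lia) Sxm.
  exists k.+1, w; split => //; rewrite mulSn; lia.
- by exists 0, x; split.
Qed.

Lemma notAp a b p i h : 1 < a -> i < p -> a <= h ->
  a ^ p <= h * gi a b p i /\ monl (gens_abp a b p) (h * gi a b p i - a ^ p).
Proof.
move=> a1 ip ah.
have hd : h * gi a b p i = (h - a) * gi a b p i + a * gi a b p i.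
  by rewrite -mulnDl subnK.
case: (ltnP i.+1 p) => ip1.
  have e : a * gi a b p i = (a - 1) * a ^ p + gi a b p i.+1.
    rewrite /gi expnS; have : 1 <= a by lia. nia.
  have g1 : a ^ p <= gi a b p i.+1 by rewrite /gi leq_addr.
  split; first by rewrite hd e addnA; apply: (leq_trans g1); rewrite leq_addl.
  have -> : h * gi a b p i - a ^ p = (h - a) * gi a b p i + ((a - 2) * a ^ p + gi a b p i.+1).
    rewrite hd e; have : 2 <= a by []. nia.
  apply: monD; first by apply: monM; apply: mem_gi.
  apply: monD; first by apply: monM; apply: mem_m.
  by apply: monG; apply: mem_gi.
have pe : p = i.+1 by lia.
have e : a * gi a b p i = (a + b) * a ^ p.
  by rewrite /gi pe expnS; nia.
split; first by rewrite hd e; nia.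
have -> : h * gi a b p i - a ^ p = (h - a) * gi a b p i + (a + b - 1) * a ^ p.
  rewrite hd e; have : 2 <= a by []. nia.
apply: monD; first by apply: monM; apply: mem_gi.
by apply: monM; apply: mem_m.
Qed.

Lemma reduce a b p w c (l : nat -> nat) : 1 < a ->
  inAp (monl (gens_abp a b p)) (a ^ p) w -> w = c * a ^ p + \sum_(j < p) l j * gi a b p j ->
  c = 0 /\ forall i, i < p -> l i < a.
Proof.
move=> a1 [Sw nA] ew; split.
  case: c ew => // c ew; exfalso; apply: nA; split; first by rewrite ew mulSn; lia.
  have -> : w - a ^ p = c * a ^ p + \sum_(j < p) l j * gi a b p j by rewrite ew mulSn; lia.
  exact: S_comb.
move=> i ip; rewrite ltnNge; apply/negP => ai; apply: nA.
have [h1 h2] := notAp b a1 ip ai.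
pose l' := fun j => l j * (j != i).
have es : \sum_(j < p) l j * gi a b p j = \sum_(j < p) l' j * gi a b p j + l i * gi a b p i.
  rewrite -(sum_ind (fun j => l j * gi a b p j) ip) -big_split /=; apply: eq_bigr => j _.
  rewrite /l'; case: eqP => [->|] /=; lia.
split; first by rewrite ew es; lia.
have -> : w - a ^ p = (c * a ^ p + \sum_(j < p) l' j * gi a b p j) + (l i * gi a b p i - a ^ p).
  rewrite ew es; lia.
apply: monD => //; exact: S_comb.
Qed.
Lemma cancel_mod P b X Y N N' : coprime P b -> N < P -> N' < P ->
  X * P + b * N = Y * P + b * N' -> N = N'.
Proof.
move=> cPb.
wlog le : X Y N N' / N <= N'.
  move=> H hN hN' E; case: (leqP N N') => h; first exact: (H X Y).
  by apply/esym; apply: (H Y X N' N (ltnW h) hN' hN); rewrite E.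
move=> hN hN' E.
have bl : b * N <= b * N' by rewrite leq_mul2l le orbT.
have e2 : X * P = Y * P + b * (N' - N) by rewrite mulnBr; lia.
have : P %| b * (N' - N).
  by rewrite -(dvdn_addr _ (dvdn_mull Y (dvdnn P))) -e2 dvdn_mull.
rewrite Gauss_dvdr //.
case: (posnP (N' - N)) => [|h /dvdn_leq]; first lia.
move=> /(_ h); lia.
Qed.

Lemma ap_eq a b p (mu nu : nat -> nat) k : 1 < a -> coprime a b ->
  (forall i, i < p -> mu i < a) -> (forall i, i < p -> nu i < a) ->
  \sum_(j < p) mu j * gi a b p j = k * a ^ p + \sum_(j < p) nu j * gi a b p j -> k = 0.
Proof.
move=> a1 cab hmu hnu; rewrite !sum_split => E.
have eN := @cancel_mod (a ^ p) b (\sum_(j < p) mu j) (k + \sum_(j < p) nu j) _ _ (coprimeXl p cab)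
  (digit_bound hmu) (digit_bound hnu) ltac:(rewrite mulnDl; lia).
have emn := digit_uniq (ltnW a1) hmu hnu eN.
have es : \sum_(j < p) mu j = \sum_(j < p) nu j.
  by apply: eq_bigr => j _; apply: emn.
have P0 : 0 < a ^ p by rewrite expn_gt0; lia.
move: E; rewrite es eN; nia.
Qed.

Lemma sum_box a b p (lam : nat -> nat) :
  \sum_(1 <= k < size (gens_abp a b p)) lam k * gen (gens_abp a b p) k =
  \sum_(i < p) lam i.+1 * gi a b p i.
Proof.
rewrite size_G0 big_add1 -pred_Sn big_mkord; apply: eq_bigr => i _; rewrite genS //.
Qed.

Lemma ap_box a b p s : 1 < a -> coprime a b ->
  (inAp (monl (gens_abp a b p)) (a ^ p) s <->
   exists mu : nat -> nat, (forall i, i < p -> mu i < a) /\ s = \sum_(i < p) mu i * gi a b p i).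
Proof.
move=> a1 cab; split.
  move=> As; have [c [l E]] := S_rep (proj1 As).
  have [c0 hl] := reduce a1 As E.
  by exists l; split => //; rewrite E c0.
move=> [mu [hmu E]].
have Ss : monl (gens_abp a b p) s by rewrite E -(add0n (\sum_(i < p) _)) -(mul0n (a ^ p)); apply: S_comb.
have P0 : 0 < a ^ p by rewrite expn_gt0; lia.
have [k [w [Aw Ew]]] := dec P0 Ss.
have [c [l El]] := S_rep (proj1 Aw).
have [c0 hl] := reduce a1 Aw El.
rewrite c0 mul0n add0n in El.
have k0 : k = 0 by apply: (ap_eq a1 cab hmu hl); rewrite -E -El.
by rewrite Ew k0 mul0n add0n.
Qed.
Lemma mon1_dvd P x : monl [:: P] x -> P %| x.
Proof.
elim=> [|u v Gu _ IH]; first exact: dvdn0.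
by move: Gu; rewrite inE => /eqP ->; rewrite dvdn_addr.
Qed.

Theorem mainTheorem12 (a b p : nat) :
  1 < a -> 1 < b -> 1 < p -> coprime a b ->
  (exists g, is_msg (monl (gens_abp a b p)) g) /\
  (forall g, is_msg (monl (gens_abp a b p)) g ->
     alpha_rectangular (monl (gens_abp a b p)) g /\
     ~ telescopic (monl (gens_abp a b p)) g).
Proof.
move=> a1 b1 p1 cab.
have b0 : 0 < b by lia.
have p0 : 0 < p by lia.
split; first by exists (gens_abp a b p); apply: msg_G0.
move=> g /(msg_uniq a1 b0 p0 cab) ->.
split.
- exists (fun _ => a - 1); split.
  + move=> k /andP [k0 kp]; rewrite size_G0 in kp.
    have ek : k = k.-1.+1 by lia.
    have ip : k.-1 < p by lia.
    rewrite /is_alpha gen0 ek genS //; split.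
      apply/(ap_box _ _ a1 cab); exists (fun j => (a - 1) * (j == k.-1 :> nat)); split.
        move=> j _; case: (j == k.-1 :> nat); lia.
      rewrite -(sum_ind (fun j => (a - 1) * gi a b p j) ip); apply: eq_bigr => j _; lia.
    move=> h' [_ nA]; rewrite leqNgt; apply/negP => lt.
    by apply: nA; apply: (notAp b a1 ip); lia.
  + move=> s; rewrite ap_box //; split.
    * move=> [mu [hmu E]]; exists (fun k => mu k.-1); split.
        move=> k /andP [k0 kp]; rewrite size_G0 in kp.
        have := hmu k.-1 ltac:(lia); lia.
      by rewrite sum_box E.
    * move=> [lam [hl E]]; exists (fun i => lam i.+1); split; last by rewrite E sum_box.
      move=> i ip; have := hl i.+1 ltac:(rewrite size_G0; lia); lia.
- move=> [tau [ht Hbox]].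
  have [h1 _] := ht 1 ltac:(rewrite size_G0; lia).
  move: h1; rewrite (genS _ _ p0) G0E /= take0 => /mon1_dvd.
  rewrite /gi expn0 mul1n mulnDr (dvdn_addr _ (dvdn_mull _ (dvdnn _))) mulnC Gauss_dvdr; last exact: coprimeXl.
  move/dvdn_leq => /(_ (ltn0Sn _)) hle.
  have ap : a < a ^ p.
    by rewrite -{1}(expn1 a) ltn_exp2l.
  have [_ nA] : inAp (monl (gens_abp a b p)) (gen (gens_abp a b p) 0) (tau 1 * gi a b p 0).
    apply/Hbox; exists (fun k => tau 1 * (k == 1)); split.
      by move=> k _; case: eqP => [->|_]; lia.
    rewrite sum_box -(sum_ind (fun j => tau 1 * gi a b p j) p0); apply: eq_bigr => j _.
    rewrite eqSS; lia.
  by apply: nA; rewrite gen0; apply: (notAp b a1 p0); lia.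
Qed.
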